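(* Let $G$ be a finite group of order $p^a m$, where $p$ is a prime and $m$ is not divisible by $p$, and let $P$ be a Sylow $p$-subgroup of $G$. If $w$ is any group word such that $w(G)$ is nilpotent, then \[ P\cap w(G)=\langle P\cap G_{w^m}\rangle . \]
   Context: For a group word $w$ and a group $G$, $G_w$ denotes the set of all values of $w$ in $G$ and $w(G)=\langle G_w\rangle$ is the verbal subgroup of $w$. For an integer $m$, $G_{w^m}=\{g^m : g\in G_w\}$. *)

(* Defs.v *)
From mathcomp Require Import all_boot all_fingroup all_solvable.
Set Implicit Arguments. Unset Strict Implicit. Unset Printing Implicit Defensive.
Local Open Scope group_scope.

(* A group word in the n variables x_0, ..., x_{n-1} (an element of the free
   group on n generators, given syntactically). *)
Inductive word (n : nat) : Type :=
  | wVar of 'I_n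
  | wOne
  | wMul of word n & word n
  | wInv of word n.

Fixpoint weval (gT : finGroupType) (n : nat) (f : 'I_n -> gT) (w : word n) : gT :=
  match w with
  | wVar i => f i
  | wOne => 1
  | wMul u v => weval f u * weval f v
  | wInv u => (weval f u)^-1
  end.

Definition word_values (gT : finGroupType) (G : {set gT}) (n : nat) (w : word n)
  : {set gT} :=
  [set weval (fun i => f i) w | f : {ffun 'I_n -> gT} in [set f : {ffun 'I_n -> gT} | [forall i, f i \in G]]].

Definition verbal (gT : finGroupType) (G : {set gT}) (n : nat) (w : word n) : {set gT} :=
  <<word_values G w>>.

Definition word_values_pow (gT : finGroupType) (G : {set gT}) (n : nat) (w : word n)
  (m : nat) : {set gT} :=
  [set g ^+ m | g in word_values G w].

(* Main.v *)
Require Import Defs.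
From mathcomp Require Import all_boot all_fingroup all_solvable.
Set Implicit Arguments. Unset Strict Implicit. Unset Printing Implicit Defensive.
Local Open Scope group_scope.

Lemma weval_in (gT : finGroupType) (G : {group gT}) n (f : 'I_n -> gT) (w : word n) :
  (forall i, f i \in G) -> weval f w \in G.
Proof.
move=> fG; elim: w => [i||u IHu v IHv|u IHu] /=; rewrite ?group1 ?groupM ?groupV //.
Qed.

Lemma weval_conj (gT : finGroupType) n (f : 'I_n -> gT) (w : word n) x :
  weval (fun i => f i ^ x) w = (weval f w) ^ x.
Proof.
elim: w => [i||u IHu v IHv|u IHu] /=; by rewrite ?conj1g ?conjMg ?conjVg ?IHu ?IHv.
Qed.

Lemma weval_ext (gT : finGroupType) n (f g : 'I_n -> gT) (w : word n) :
  (forall i, f i = g i) -> weval f w = weval g w.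
Proof. move=> fg; elim: w => [i||u IHu v IHv|u IHu] /=; by rewrite ?fg ?IHu ?IHv. Qed.

Lemma word_valuesP (gT : finGroupType) (G : {group gT}) n (w : word n) g :
  g \in word_values G w -> exists2 f : {ffun 'I_n -> gT}, (forall i, f i \in G) & g = weval f w.
Proof.
case/imsetP=> f; rewrite inE => /forallP fG ->; by exists f.
Qed.

Lemma word_values_sub (gT : finGroupType) (G : {group gT}) n (w : word n) :
  word_values G w \subset G.
Proof. apply/subsetP=> g /word_valuesP [f fG ->]; exact: weval_in. Qed.

Lemma word_values_conj (gT : finGroupType) (G : {group gT}) n (w : word n) g x :
  x \in G -> g \in word_values G w -> g ^ x \in word_values G w.
Proof.
move=> Gx /word_valuesP [f fG ->]; rewrite -weval_conj.
have -> : weval (fun i => f i ^ x) w = weval (fun i => [ffun j => f j ^ x] i) w.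
  by apply: weval_ext => i; rewrite ffunE.
apply: imset_f; rewrite inE; apply/forallP => i; by rewrite ffunE groupJ.
Qed.

Lemma verbal_normal (gT : finGroupType) (G : {group gT}) n (w : word n) :
  <<word_values G w>> <| G.
Proof.
apply/andP; split; first by rewrite gen_subG word_values_sub.
apply: norms_gen; apply/normsP => x Gx; apply/eqP.
rewrite eqEcard cardJg leqnn andbT; apply/subsetP => y.
rewrite mem_conjg => /(word_values_conj Gx); by rewrite conjgKV.
Qed.

Theorem theorem1p4 (gT : finGroupType) (G P : {group gT}) (p a m : nat)
  (n : nat) (w : word n) :
  prime p -> ~~ (p %| m) -> #|G| = (p ^ a * m)%N -> P \in 'Syl_p(G) ->
  nilpotent (verbal G w) ->
  P :&: verbal G w = <<P :&: word_values_pow G w m>>.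
Proof.
move=> pp npm cardG sylP; rewrite /verbal => nilV.
set A := word_values G w; set B := word_values_pow G w m.
set V := <<A>>.
have hallP : p.-Hall(G) P by move: sylP; rewrite inE.
have nVG : V <| G := verbal_normal G w.
have sVG : V \subset G := normal_sub nVG.
set O := 'O_p(V); set K := 'O_p^'(V).
have hO : p.-Hall(V) O := nilpotent_pcore_Hall p nilV.
have hK : p^'.-Hall(V) K := nilpotent_pcore_Hall p^' nilV.
have sOP : O \subset P.
  apply: subset_trans (pcore_sub_Hall hallP).
  apply: pcore_max; first exact: pcore_pgroup.
  exact: char_normal_trans (pcore_char p V) nVG.
have m_gt0 : (0 < m)%N.
  by rewrite lt0n; apply/eqP => m0; move: (cardG_gt0 G); rewrite cardG m0 muln0.
have p'm : p^'.-nat m by rewrite p'natE.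
have F4 : forall g, g \in A -> g ^+ m \in O.
  move=> g Ag; have Vg : g \in V := mem_gen Ag.
  rewrite (mem_Hall_pcore hO) ?groupX //.
  rewrite -p_eltNK; apply/constt1P; rewrite consttX.
  apply/eqP; rewrite -order_dvdn.
  have Gg' : g.`_p^' \in G by rewrite (subsetP sVG) // groupX.
  have := order_dvdG Gg'; rewrite cardG Gauss_dvdr //.
  apply: (@p'nat_coprime p); first exact: p_elt_constt.
  by rewrite pnatX pnat_id.
set H := <<P :&: B>>.
have F5 : forall g, g \in A -> g.`_p \in H.
  move=> g Ag; have PBg : g ^+ m \in P :&: B.
    by rewrite inE (subsetP sOP) ?F4 //; apply: imset_f.
  have : g.`_p \in <[g.`_p ^+ m]>.
    have : coprime #[g.`_p] m.
      apply: (@pnat_coprime p) => //; exact: p_elt_constt.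
    rewrite -generator_coprime /generator => /eqP <-; exact: cycle_id.
  apply: (subsetP _); rewrite cycle_subG -consttX.
  apply: (subsetP _ _ (cycle_constt _ _)); by rewrite cycle_subG mem_gen.
have sHO : H \subset O.
  rewrite gen_subG; apply/subsetP => x; rewrite inE => /andP [_ /imsetP [g Ag ->]].
  exact: F4.
have sHV : H \subset V := subset_trans sHO (pcore_sub _ _).
have sVHK : V \subset H * K.
  have nKH : H \subset 'N(K).
    apply: subset_trans sHV _; exact: normal_norm (pcore_normal _ _).
  rewrite -norm_joinEl //.
  rewrite gen_subG; apply/subsetP => g Ag.
  suff : g \in H * K by rewrite -norm_joinEl.
  rewrite -(consttC p g); apply: mem_mulg; first exact: F5.
  rewrite (mem_Hall_pcore hK) ?p_elt_constt //.
  by rewrite groupX // mem_gen.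
have sOH : O \subset H.
  have : O \subset H * K :&: O by rewrite subsetI (subset_trans (pcore_sub _ _) sVHK) subxx.
  rewrite -group_modl // setIC coprime_TIg ?mulg1 //.
  apply: (@pnat_coprime p); exact: pcore_pgroup.
apply/eqP; rewrite eqEsubset; apply/andP; split.
  apply: subset_trans sOH; rewrite (sub_Hall_pcore hO) ?subsetIr //.
  exact: pgroupS (subsetIl _ _) (pHall_pgroup hallP).
by rewrite subsetI (subset_trans sHO sOP) sHV.
Qed.
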